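(* Let $G$ be a finite group with $|G|\ge 3$. (1) For every subset $G_0\subset G$, the inclusion $\mathcal B(G_0)\subset\mathcal F(G_0)$ is cofinal and $\mathcal B(G_0)$ is a C-monoid. (2) $\mathsf v_g(\mathcal B(G))=\mathbb N_0$ for all $g\in G$; the embedding $\widehat{\mathcal B(G)}\hookrightarrow\mathcal F(G)$ is a divisor theory, and the map $\Phi:\mathsf q(\mathcal F(G))/\mathsf q(\mathcal B(G))\to G/G'$, $S\,\mathsf q(\mathcal B(G))\mapsto gG'$ for $S\in\mathcal F(G)$ and $g\in\pi(S)$, is a well-defined group isomorphism; here $\mathsf q(\mathcal F(G))/\mathsf q(\mathcal B(G))$ is the class group of the Krull monoid $\widehat{\mathcal B(G)}$. (3) There is a semigroup epimorphism from the class semigroup $\mathcal C(\mathcal B(G),\mathcal F(G))$ onto $G/G'$.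
   Context: Let $G$ be a finite group written multiplicatively with identity $1_G$, and $G'$ its commutator subgroup. For $G_0\subset G$, $\mathcal F(G_0)$ is the free abelian monoid with basis $G_0$ (sequences $S=g_1\boldsymbol{\cdot}\ldots\boldsymbol{\cdot}g_\ell$, operation $\boldsymbol{\cdot}$), $\mathsf v_g(S)$ is the multiplicity of $g$ in $S$, $\pi(S)=\{g_{\tau(1)}\cdots g_{\tau(\ell)}:\tau\text{ a permutation}\}$ ($\pi$ of the empty sequence is $\{1_G\}$), and $\mathcal B(G_0)=\{S\in\mathcal F(G_0):1_G\in\pi(S)\}$. For a monoid $H$, $\mathsf q(H)$ is its quotient group and $\widehat H=\{x\in\mathsf q(H):\exists c\in H\ \forall n\in\mathbb N:\ cx^n\in H\}$ its complete integral closure. A submonoid $H\subset F$ is cofinal if every $\alpha\in F$ divides some element of $H$ in $F$. A homomorphism $\varphi:H\to D$ is a divisor theory if $D$ is free abelian, $\varphi(a)\mid\varphi(b)$ implies $a\mid b$, and every $\alpha\in D$ is the gcd of finitely many elements of $\varphi(H)$. For a submonoid $H$ of a monoid $F$, $y,y'\in F$ are $H$-equivalent if $y^{-1}H\cap F=y'^{-1}H\cap F$; this is a congruence, the set of classes $\mathcal C(H,F)$ is the class semigroup, and $\mathcal C^*(H,F)$ is the subsemigroup of classes of elements of $(F\setminus F^\times)\cup\{1\}$. $H$ is a C-monoid if it is a submonoid of a factorial monoid $F$ with $H\cap F^\times=H^\times$ and $\mathcal C^*(H,F)$ finite. *)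

(* Defs.v *)
From mathcomp Require Import all_boot all_order all_algebra all_fingroup all_solvable.
Set Implicit Arguments.
Unset Strict Implicit.
Unset Printing Implicit Defensive.
Import GRing.Theory Num.Theory.

(* Generic commutative-monoid notions, written additively inside an          *)
(* nmodType M; a (sub)monoid is given by a predicate P : M -> Prop.          *)
Section MonoidNotions.
Variable M : nmodType.
Local Open Scope ring_scope.

Definition submonoid (P : M -> Prop) : Prop :=
  P 0 /\ (forall a b, P a -> P b -> P (a + b)).

Definition unit_in (P : M -> Prop) (x : M) : Prop :=
  P x /\ exists y, P y /\ x + y = 0.

Definition dvd_in (P : M -> Prop) (a b : M) : Prop :=
  exists c, P c /\ b = a + c.

Definition cancellative_in (P : M -> Prop) : Prop :=
  forall a b c, P a -> P b -> P c -> a + b = a + c -> b = c.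

Definition prime_in (P : M -> Prop) (p : M) : Prop :=
  P p /\ ~ unit_in P p /\
  (forall a b, P a -> P b -> dvd_in P p (a + b) -> dvd_in P p a \/ dvd_in P p b).

Definition factorial_in (P : M -> Prop) : Prop :=
  submonoid P /\ cancellative_in P /\
  forall a, P a -> ~ unit_in P a ->
    exists s : seq M, (forall p, p \in s -> prime_in P p) /\ a = \sum_(p <- s) p.

(* y, y' in F are H-equivalent : y^{-1}H \cap F = y'^{-1}H \cap F *)
Definition H_equiv (H F : M -> Prop) (y y' : M) : Prop :=
  forall x, F x -> (H (y + x) <-> H (y' + x)).

(* elements of (F \ F^x) \cup {1} *)
Definition star_elt (F : M -> Prop) (y : M) : Prop :=
  F y /\ (~ unit_in F y \/ y = 0).

(* C^*(H,F) is finite: finitely many H-equivalence classes of elements of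
   (F \ F^x) \cup {1} *)
Definition Cstar_finite (H F : M -> Prop) : Prop :=
  exists L : seq M, (forall l, l \in L -> star_elt F l) /\
    forall y, star_elt F y -> exists l, l \in L /\ H_equiv H F y l.

End MonoidNotions.

(* H (a submonoid of an ambient monoid M0) is a C-monoid: it is (isomorphic,
   via an injective monoid homomorphism iota, to) a submonoid of a factorial
   monoid F with H \cap F^x = H^x and C^*(H,F) finite. *)
Definition C_monoid (M0 : nmodType) (H : M0 -> Prop) : Prop :=
  exists (M : nmodType) (F : M -> Prop) (iota : M0 -> M),
    submonoid H /\ factorial_in F /\
    (forall h, H h -> F (iota h)) /\
    (forall h h', H h -> H h' -> iota h = iota h' -> h = h') /\
    iota 0%R = 0%R /\
    (forall h h', H h -> H h' -> iota (h + h')%R = (iota h + iota h')%R) /\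
    let H' := fun y => exists h, H h /\ y = iota h in
    (forall x, (H' x /\ unit_in F x) <-> unit_in H' x) /\
    Cstar_finite H' F.

Section GroupNotions.
Variable M : zmodType.
Local Open Scope ring_scope.

Definition qgrp (H : M -> Prop) (x : M) : Prop :=
  exists a b, H a /\ H b /\ x = a - b.

Definition cic (H : M -> Prop) (x : M) : Prop :=
  qgrp H x /\ exists c, H c /\ forall n : nat, H (c + x *+ n).

Definition is_gcd_in (D : M -> Prop) (a : M) (s : seq M) : Prop :=
  D a /\ (forall x, x \in s -> dvd_in D a x) /\
  (forall b, D b -> (forall x, x \in s -> dvd_in D b x) -> dvd_in D b a).

Definition incl_divisor_theory (H D : M -> Prop) : Prop :=
  (forall a, H a -> D a) /\
  (forall a b, H a -> H b -> dvd_in D a b -> dvd_in H a b) /\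
  (forall al, D al -> exists s : seq M,
       s != [::] /\ (forall x, x \in s -> H x) /\ is_gcd_in D al s).
End GroupNotions.

(* Sequences over a finite group gT.  The free abelian monoid F(G) is        *)
(* realised as the nonnegative elements of Z^G = {ffun gT -> int}; its       *)
(* quotient group is Z^G.  S g is the multiplicity v_g(S).                   *)
Section Sequences.
Variable gT : finGroupType.

Definition seqZ := {ffun gT -> int}.

Definition inF (G0 : {set gT}) (S : seqZ) : Prop :=
  forall g, (0 <= S g)%R /\ (S g != 0%R -> g \in G0).

Definition terms (S : seqZ) : seq gT :=
  flatten [seq nseq (absz (S g)) g | g <- enum gT].

Definition pi_set (S : seqZ) : {set gT} :=
  [set x | x \in [seq foldr (fun a b => (a * b)%g) 1%g t
                   | t <- permutations (terms S)]].

Definition inB (G0 : {set gT}) (S : seqZ) : Prop :=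
  inF G0 S /\ (1%g \in pi_set S).

Definition derivedT : {group gT} := [~: [set: gT], [set: gT]]%G.
End Sequences.

(* Main.v *)
Require Import Defs.
From mathcomp Require Import all_boot all_order all_algebra all_fingroup all_solvable.
From mathcomp Require Import zify.
Set Implicit Arguments. Unset Strict Implicit. Unset Printing Implicit Defensive.
Import GRing.Theory Num.Theory Order.TTheory.

Section Basics.
Variable gT : finGroupType.
Local Notation sZ := (seqZ gT).
Local Open Scope ring_scope.

Definition prodl (t : seq gT) : gT := foldr (fun a b => (a * b)%g) 1%g t.

Lemma prodl_cat s t : prodl (s ++ t) = (prodl s * prodl t)%g.
Proof. elim: s => [|x s IH] /=; first by rewrite mul1g. by rewrite IH mulgA. Qed.

Lemma prodl_nseq n g : prodl (nseq n g) = (g ^+ n)%g.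
Proof. elim: n => [|n IH] //=. by rewrite IH expgS. Qed.

Definition seqof (t : seq gT) : sZ := [ffun x => (count_mem x t)%:Z].

Lemma seqofE t x : seqof t x = (count_mem x t)%:Z.
Proof. by rewrite ffunE. Qed.

Lemma seqof_cat s t : seqof (s ++ t) = seqof s + seqof t.
Proof. apply/ffunP => x; by rewrite !ffunE count_cat PoszD. Qed.

Lemma seqof_nil : seqof [::] = 0.
Proof. by apply/ffunP => x; rewrite !ffunE. Qed.

Lemma seqof_perm s t : perm_eq s t -> seqof s = seqof t.
Proof. move=> /seq.permP H; apply/ffunP => x; by rewrite !ffunE H. Qed.

Lemma seqof_ge0 t x : 0 <= seqof t x.
Proof. by rewrite ffunE. Qed.

Definition e (g : gT) : sZ := seqof [:: g].

Lemma seqof_cons x t : seqof (x :: t) = e x + seqof t.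
Proof. by rewrite -cat1s seqof_cat. Qed.

Lemma eE g x : e g x = (g == x)%:Z.
Proof. by rewrite ffunE /= addn0. Qed.

Lemma seqof_nseq n g : seqof (nseq n g) = e g *+ n.
Proof. elim: n => [|n IH]; first by rewrite seqof_nil. by rewrite /= seqof_cons IH mulrS. Qed.

Lemma count_terms (S : sZ) x : count_mem x (terms S) = absz (S x).
Proof.
rewrite /terms count_flatten -map_comp.
have -> : [seq (count_mem x \o (fun g => nseq (absz (S g)) g)) i | i <- enum gT]
   = [seq (g == x) * absz (S g) | g <- enum gT]%N.
  by apply: eq_map => g /=; rewrite count_nseq.
rewrite sumnE big_map big_enum /= (bigD1 x) //= eqxx mul1n big1 ?addn0 //.
by move=> g /negbTE ->.
Qed.

Lemma terms_seqof t : perm_eq (terms (seqof t)) t.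
Proof.
rewrite /perm_eq; apply/allP => x _; apply/eqP.
by rewrite count_terms ffunE.
Qed.

Lemma seqof_terms (S : sZ) : (forall g, 0 <= S g) -> seqof (terms S) = S.
Proof. move=> H; apply/ffunP => x; by rewrite ffunE count_terms gez0_abs. Qed.

Lemma pi_in t : prodl t \in pi_set (seqof t).
Proof.
rewrite /pi_set inE; apply/mapP; exists t => //.
by rewrite mem_permutations perm_sym terms_seqof.
Qed.

Lemma pi_out (S : sZ) x : (forall g, 0 <= S g) -> x \in pi_set S ->
  exists t, seqof t = S /\ prodl t = x.
Proof.
move=> H; rewrite /pi_set inE => /mapP [t]; rewrite mem_permutations => Ht ->.
exists t; split => //. by rewrite (seqof_perm Ht) seqof_terms.
Qed.

End Basics.
Section Monoid.
Variable gT : finGroupType.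
Local Notation sZ := (seqZ gT).
Local Open Scope ring_scope.
Implicit Types (S T : sZ) (t : seq gT).

Lemma inF_ge0 (G0 : {set gT}) S : inF G0 S -> forall g, 0 <= S g.
Proof. by move=> H g; case: (H g). Qed.

Lemma inF0 (G0 : {set gT}) : inF G0 0.
Proof. by move=> g; rewrite ffunE eqxx. Qed.

Lemma inFD (G0 : {set gT}) S T : inF G0 S -> inF G0 T -> inF G0 (S + T).
Proof.
move=> HS HT g; rewrite ffunE; case: (HS g) (HT g) => [h1 h2] [h3 h4]; split.
  exact: addr_ge0.
move=> Hne; case: (boolP (S g == 0)) => [/eqP HS0|]; last exact: h2.
by apply: h4; move: Hne; rewrite HS0 add0r.
Qed.

Lemma inFMn (G0 : {set gT}) S n : inF G0 S -> inF G0 (S *+ n).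
Proof. move=> H; elim: n => [|n IH]; first exact: inF0. by rewrite mulrS; apply: inFD. Qed.

Lemma inFT S : inF [set: gT] S <-> forall g, 0 <= S g.
Proof. split; first exact: inF_ge0. by move=> H g; split; rewrite ?in_setT. Qed.

Lemma inF_seqofT t : inF [set: gT] (seqof t).
Proof. by apply/inFT => g; apply: seqof_ge0. Qed.

Lemma inF_e (G0 : {set gT}) g : g \in G0 -> inF G0 (e g).
Proof.
move=> Hg x; rewrite eE; split => //. by case: (g =P x) => [<-|].
Qed.

Lemma inB_seqof (G0 : {set gT}) t : inF G0 (seqof t) -> prodl t = 1%g -> inB G0 (seqof t).
Proof. move=> H1 H2; split => //; rewrite -H2; exact: pi_in. Qed.

Lemma inB_out (G0 : {set gT}) S : inB G0 S -> exists t, seqof t = S /\ prodl t = 1%g.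
Proof. move=> [HF Hp]; exact: pi_out (inF_ge0 HF) Hp. Qed.

Lemma inB0 (G0 : {set gT}) : inB G0 0.
Proof. rewrite -(seqof_nil gT); apply: inB_seqof; [rewrite seqof_nil; exact: inF0|by []]. Qed.

Lemma inBD (G0 : {set gT}) S T : inB G0 S -> inB G0 T -> inB G0 (S + T).
Proof.
move=> HS HT; have HF := inFD HS.1 HT.1.
case: (inB_out HS) => s [Hs1 Hs]; case: (inB_out HT) => t [Ht1 Ht].
rewrite -Hs1 -Ht1 -seqof_cat in HF *; apply: inB_seqof => //.
by rewrite prodl_cat Hs Ht mulg1.
Qed.

Lemma inBMn (G0 : {set gT}) S n : inB G0 S -> inB G0 (S *+ n).
Proof. move=> H; elim: n => [|n IH]; first exact: inB0. by rewrite mulrS; apply: inBD. Qed.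

Lemma rep_list t n : exists t', seqof t' = seqof t *+ n /\ prodl t' = (prodl t ^+ n)%g.
Proof.
elim: n => [|n [t' [H1 H2]]]; first by exists (Nil gT); rewrite seqof_nil.
exists (t ++ t'); by rewrite seqof_cat H1 prodl_cat H2 mulrS expgS.
Qed.

Definition NG := #|[set: gT]|.

Lemma expN (x : gT) : (x ^+ NG)%g = 1%g.
Proof. by apply: expg_cardG; rewrite in_setT. Qed.

Lemma NG_gt0 : (0 < NG)%N.
Proof. by rewrite /NG cardsT; apply/card_gt0P; exists 1%g. Qed.

Lemma inB_hN (G0 : {set gT}) S : inF G0 S -> inB G0 (S *+ NG).
Proof.
move=> H; have HF := inFMn NG H.
case: (rep_list (terms S) NG) => t' [H1 H2].
rewrite seqof_terms in H1; last exact: inF_ge0 H.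
rewrite -H1; apply: inB_seqof; first by rewrite H1.
by rewrite H2 expN.
Qed.

Lemma cofinal (G0 : {set gT}) A : inF G0 A -> exists S, inB (G0 : {set gT}) S /\ dvd_in (inF G0) A S.
Proof.
move=> H; exists (A *+ NG); split; first exact: inB_hN.
exists (A *+ NG.-1); split; first exact: inFMn.
by rewrite -mulrS prednK // NG_gt0.
Qed.

End Monoid.
Section Deletion.
Variable gT : finGroupType.
Local Notation sZ := (seqZ gT).
Local Open Scope ring_scope.
Implicit Types (S T : sZ) (t : seq gT).
Variables (g v : gT).

Fixpoint goodcnt (p : gT) t : nat :=
  if t is x :: t' then (((x == g) && (p == v)) + goodcnt (p * x)%g t')%N else 0%N.

Lemma del_lemma t : forall (p : gT) (d : nat), (d <= goodcnt p t)%N ->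
  exists t', perm_eq t (t' ++ nseq d g) /\
    (p * prodl t' = (v * g^-1 * v^-1) ^+ d * (p * prodl t))%g.
Proof.
elim: t => [|x t IH] p d /=.
  rewrite leqn0 => /eqP ->; exists (Nil gT); by rewrite expg0 mul1g.
case: d => [|d] Hd.
  exists (x :: t); by rewrite cats0 expg0 mul1g.
case: (boolP ((x == g) && (p == v))) => Hg.
  move: Hd; rewrite Hg add1n ltnS => Hd; move: Hg => /andP [/eqP Hx /eqP Hp].
  case: (IH (p * x)%g d Hd) => t' [Hperm Hprod].
  exists t'; split.
    rewrite /= Hx perm_sym -[g :: nseq d g]cat1s perm_catCA /= perm_cons perm_sym //.
  have E : (p * prodl t' = (v * g^-1 * v^-1) * ((p * x) * prodl t'))%g.
    by rewrite Hx Hp !mulgA !mulgKV.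
  by rewrite E Hprod expgS !mulgA.
move: Hd; rewrite (negbTE Hg) add0n => Hd.
case: (IH (p * x)%g d.+1 Hd) => t' [Hperm Hprod].
exists (x :: t'); split; first by rewrite /= perm_cons.
by rewrite /= mulgA Hprod !mulgA.
Qed.

End Deletion.
Section Shift.
Variable gT : finGroupType.
Local Notation sZ := (seqZ gT).
Local Open Scope ring_scope.
Implicit Types (S T : sZ) (t : seq gT).

Lemma sum_goodcnt (g : gT) t : forall p, (\sum_(w : gT) goodcnt g w p t)%N = count_mem g t.
Proof.
elim: t => [|x t IH] p /=; first by rewrite big1.
rewrite big_split /= IH; congr (_ + _)%N.
rewrite (bigD1 p) //= eqxx andbT big1 ?addn0 //.
by move=> w /negbTE; rewrite eq_sym => ->; rewrite andbF.
Qed.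

Lemma pigeon (g : gT) t : (NG gT * (NG gT).-1 < count_mem g t)%N ->
  exists w, (NG gT <= goodcnt g w 1%g t)%N.
Proof.
move=> H; case: (boolP [exists w : gT, (NG gT <= goodcnt g w 1%g t)%N]).
  by move/existsP => [w Hw]; exists w.
rewrite negb_exists => /forallP Hall; exfalso.
have : (count_mem g t <= \sum_(w : gT) (NG gT).-1)%N.
  rewrite -(sum_goodcnt g t 1%g); apply: leq_sum => w _.
  by move: (Hall w); rewrite -ltnNge => Hw; rewrite -ltnS prednK // NG_gt0.
by rewrite sum_nat_const -cardsT -/(NG gT) leqNgt H.
Qed.

Lemma shift_equiv (G0 : {set gT}) z g : inF G0 z -> ((NG gT * NG gT)%:Z <= z g) ->
  (inB G0 (z + e g *+ NG gT) <-> inB G0 z).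
Proof.
move=> HF Hz.
have Hn := NG_gt0 gT.
have HgG : g \in G0.
  case: (HF g) => _; apply; apply: lt0r_neq0; apply: (lt_le_trans _ Hz).
  by rewrite ltz_nat muln_gt0 Hn.
have Hz0 : 0 <= z g by apply: le_trans Hz.
have HF' : inF G0 (z + e g *+ NG gT) by apply: inFD => //; apply: inFMn; apply: inF_e.
split.
- move/inB_out => [t [Ht1 Ht2]]; split => //.
  have Hc : (count_mem g t = absz (z g) + NG gT)%N.
    apply/eqP; rewrite -eqz_nat; apply/eqP.
    by rewrite -seqofE Ht1 ffunE ffunMnE eE eqxx PoszD gez0_abs // /= natz.
  have Hp : (NG gT * (NG gT).-1 < count_mem g t)%N.
    rewrite Hc; have : ((NG gT * NG gT)%N <= absz (z g))%N.
      by rewrite -lez_nat gez0_abs.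
    move: Hn; set n := NG gT => Hn H1.
    have : (n * n.-1 < n * n)%N by rewrite ltn_pmul2l // prednK // ltnS leqnn.
    lia.
  case: (pigeon Hp) => w Hw.
  case: (del_lemma Hw) => t' [Hperm Hprod].
  rewrite !mul1g expN mul1g Ht2 in Hprod.
  have <- : seqof t' = z.
    apply: (addIr (e g *+ NG gT)); rewrite -Ht1 (seqof_perm Hperm) seqof_cat seqof_nseq //.
  rewrite -Hprod; exact: pi_in.
- move/inB_out => [t [Ht1 Ht2]].
  rewrite -Ht1 -seqof_nseq -seqof_cat; apply: inB_seqof.
    by rewrite seqof_cat seqof_nseq Ht1.
  by rewrite prodl_cat Ht2 prodl_nseq expN mulg1.
Qed.

End Shift.
Section CMon.
Variable gT : finGroupType.
Local Notation sZ := (seqZ gT).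
Local Open Scope ring_scope.
Implicit Types (S T : sZ) (t : seq gT).

Lemma Hequiv_refl (H F : sZ -> Prop) y : H_equiv H F y y.
Proof. by move=> x _. Qed.

Lemma Hequiv_trans (H F : sZ -> Prop) y1 y2 y3 :
  H_equiv H F y1 y2 -> H_equiv H F y2 y3 -> H_equiv H F y1 y3.
Proof. move=> H1 H2 x Fx; rewrite (H1 x Fx); exact: H2. Qed.

Lemma unitF0 (G0 : {set gT}) x : unit_in (inF G0) x -> x = 0.
Proof.
move=> [Fx [y [Fy Hxy]]]; apply/ffunP => g.
move/ffunP: Hxy => /(_ g); rewrite !ffunE => Hs.
have := inF_ge0 Fx g; have := inF_ge0 Fy g; move: Hs.
set a := (x g : int); set b := (y g : int); lia.
Qed.

Definition bnd := (NG gT * NG gT + NG gT)%N.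

Lemma reduce_step (G0 : {set gT}) y g : inF G0 y -> bnd%:Z < y g ->
  let y' := y - e g *+ NG gT in
  [/\ inF G0 y', (\sum_x absz (y' x) < \sum_x absz (y x))%N &
      H_equiv (inB G0) (inF G0) y y'].
Proof.
move=> HF Hb y'.
have Hn := NG_gt0 gT.
have Ey' : forall x, y' x = y x - (g == x)%:Z * (NG gT)%:Z.
  move=> x; rewrite /y' !ffunE ffunMnE eE -mulr_natr natz //.
have HgG : g \in G0.
  case: (HF g) => _; apply; apply: lt0r_neq0; apply: le_lt_trans Hb; by [].
have Hbn : (bnd%:Z = (NG gT * NG gT)%:Z + (NG gT)%:Z) by rewrite /bnd PoszD.
have Hy' : inF G0 y'.
  move=> x; rewrite Ey'; case: (HF x) => H1 H2.
  case: (g =P x) => [<-|Hne]; split.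
  + rewrite mul1r; lia.
  + by move=> _.
  + rewrite mul0r subr0 //.
  + by rewrite mul0r subr0.
split => //.
- rewrite (bigD1 g) //= [X in (_ < X)%N](bigD1 g) //=.
  rewrite (eq_bigr (fun x => absz (y x))); last first.
    by move=> x; rewrite eq_sym => /negbTE Hx; rewrite Ey' Hx mul0r subr0.
  rewrite ltn_add2r Ey' eqxx mul1r.
  have H0 := inF_ge0 HF g.
  lia.
- move=> x Fx.
  have -> : y + x = (y' + x) + e g *+ NG gT.
    by rewrite /y' addrAC subrK.
  apply: shift_equiv; first exact: inFD.

  rewrite ffunE Ey' eqxx mul1r; have := inF_ge0 Fx g; move: Hb; rewrite Hbn.
  set nn := (NG gT * NG gT)%N; set a := (x g : int); set yy := (y g : int); lia.
Qed.

Lemma reduce (G0 : {set gT}) m : forall y : sZ, (\sum_x absz (y x) <= m)%N -> inF G0 y ->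
  exists l, [/\ inF G0 l, (forall g, l g <= bnd%:Z) &
    H_equiv (inB G0) (inF G0) y l].
Proof.
elim: m => [|m IH] y Hs HF.
  exists y; split; [done| |exact: Hequiv_refl].
  move=> g; case: (leP (y g) bnd%:Z) => // Hg.
  by have [_ H2 _] := reduce_step HF Hg; move: H2; rewrite ltnNge (leq_trans Hs).
case: (boolP [exists g, bnd%:Z < y g]).
  move/existsP => [g Hg].
  have [H1 H2 H3] := reduce_step HF Hg.
  have Hm : (\sum_x `|(y - e g *+ NG gT)%R x| <= m)%N by rewrite -ltnS; apply: leq_trans H2 Hs.
  have [l [Hl1 Hl2 Hl3]] := IH _ Hm H1.
  exists l; split => //; exact: Hequiv_trans H3 Hl3.
rewrite negb_exists => /forallP Hall.
exists y; split; [done| |exact: Hequiv_refl].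
by move=> g; move: (Hall g); rewrite -leNgt.
Qed.
End CMon.
Section CMon2.
Variable gT : finGroupType.
Local Notation sZ := (seqZ gT).
Local Open Scope ring_scope.
Implicit Types (S T : sZ) (t : seq gT).

Definition cand (G0 : {set gT}) (f : {ffun gT -> 'I_(bnd gT).+1}) : sZ :=
  [ffun g => if g \in G0 then (f g : nat)%:Z else 0].

Lemma inF_cand (G0 : {set gT}) f : inF G0 (cand G0 f).
Proof. move=> g; rewrite ffunE; case: ifP => // _; split => //; by rewrite eqxx. Qed.

Lemma not_unit_or0 (G0 : {set gT}) l : inF G0 l -> star_elt (inF G0) l.
Proof.
move=> H; split => //; case: (boolP (l == 0)) => [/eqP ->|Hl]; [by right|left].
by move/unitF0 => E; move: Hl; rewrite E eqxx.
Qed.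

Lemma Cstar_inB (G0 : {set gT}) : Cstar_finite (inB G0) (inF G0).
Proof.
exists [seq cand G0 f | f <- enum {ffun gT -> 'I_(bnd gT).+1}]; split.
  move=> l /mapP [f _ ->]; apply: not_unit_or0; exact: inF_cand.
move=> y [Fy _].
have [l [Hl1 Hl2 Hl3]] := reduce (leqnn _) Fy.
exists l; split => //.
apply/mapP; exists [ffun g => inord (absz (l g))]; first by rewrite mem_enum.
apply/ffunP => x; rewrite !ffunE.
have H0 := inF_ge0 Hl1 x.
case: ifP => Hx.
  rewrite inordK ?gez0_abs //.
  by rewrite ltnS -lez_nat gez0_abs // Hl2.
case: (Hl1 x) => _ H; apply/eqP; apply: contraFT Hx; exact: H.
Qed.

Lemma sum_e t : \sum_(x <- t) e x = seqof t.
Proof.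
elim: t => [|x t IH]; first by rewrite big_nil seqof_nil.
by rewrite big_cons IH seqof_cons.
Qed.

Lemma dvd_e (G0 : {set gT}) a x : inF G0 a -> 1 <= a x -> dvd_in (inF G0) (e x) a.
Proof.
move=> Fa Hx; exists (a - e x); split; last by rewrite addrC subrK.
move=> y; rewrite ffunE [X in a y + X]ffunE eE; case: (Fa y) => H1 H2.
case: (x =P y) => [<-|Hne] /=.
  split; first by move: Hx; set u := (a x : int); lia.
  move=> _; apply: (proj2 (Fa x)); apply: lt0r_neq0; by apply: lt_le_trans Hx.
by rewrite subr0; split.
Qed.

Lemma factorial_F (G0 : {set gT}) : factorial_in (inF G0).
Proof.
split; first by split; [exact: inF0 | move=> a b; exact: inFD].
split; first by move=> a b c _ _ _; exact: addrI.
move=> a Fa _; exists [seq e x | x <- terms a]; split; last first.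
  by rewrite big_map sum_e seqof_terms //; exact: inF_ge0.
move=> p /mapP [x Hx ->].
have Hax : 1 <= a x.
  have : (0 < count_mem x (terms a))%N by rewrite -has_count; apply/hasP; exists x => /=.
  rewrite count_terms => H; have := inF_ge0 Fa x; move: H; rewrite -ltz_nat gez0_abs //.
  exact: inF_ge0.
have HxG : x \in G0.
  case: (Fa x) => _; apply; apply: lt0r_neq0; by apply: lt_le_trans Hax.
split; first exact: inF_e.
split.
  move/unitF0 => /ffunP /(_ x); by rewrite eE eqxx ffunE.
move=> a0 b0 Fa0 Fb0 [c [Fc Hc]].
have : 1 <= a0 x + b0 x.
  move/ffunP: Hc => /(_ x); rewrite [LHS]ffunE [RHS]ffunE eE eqxx => ->.
  have := inF_ge0 Fc x; set u := (c x : int); lia.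
case: (leP 1 (a0 x)) => H1 H.
  by left; apply: dvd_e.
right; apply: dvd_e => //; move: H1 H; set u := (a0 x : int); set w := (b0 x : int); lia.
Qed.

Lemma Cstar_ext (H1 H2 F : sZ -> Prop) : (forall x, H1 x <-> H2 x) ->
  Cstar_finite H1 F -> Cstar_finite H2 F.
Proof.
move=> E [L [HL1 HL2]]; exists L; split => // y Hy.
have [l [Hl1 Hl2]] := HL2 y Hy; exists l; split => // x Fx.
by rewrite -!E; exact: Hl2.
Qed.

Lemma C_monoid_B (G0 : {set gT}) : C_monoid (inB G0).
Proof.
exists _, (@inF gT G0), id.
split; first by split; [exact: inB0 | move=> a b; exact: inBD].
split; first exact: factorial_F.
split; first by move=> h [].
split; first by [].
split; first by [].
split; first by [].
cbv zeta.
have E : forall x, (exists h, inB G0 h /\ x = id h) <-> inB G0 x.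
  by move=> x; split => [[h [Hh ->]] //|Hx]; exists x.
split.
  move=> x; split.
    move=> [Hx Hu]; move: (Hx); rewrite E => Hx'.
    rewrite (unitF0 Hu); split; last by exists 0; split; [rewrite E; exact: inB0|rewrite addr0].
    by rewrite E; exact: inB0.
  move=> [Hx [y [Hy Hxy]]]; split => //; split; first by move: Hx; rewrite E => [[]].
  by exists y; split => //; move: Hy; rewrite E => [[]].
apply: (Cstar_ext (H1 := inB G0)); first by move=> x; rewrite E.
exact: Cstar_inB.
Qed.

End CMon2.
Section Phi.
Variable gT : finGroupType.
Local Notation sZ := (seqZ gT).
Local Notation H := (derivedT gT).
Local Open Scope ring_scope.
Implicit Types (S T : sZ) (t : seq gT).

Definition cg (g : gT) : coset_of H := coset H g.

Lemma inN (x : gT) : x \in ('N(H))%g.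
Proof.
have : (H <| [set: gT])%g := der_normal 1 [set: gT].
by move/normal_norm/subsetP; apply; rewrite in_setT.
Qed.

Lemma cgM a b : cg (a * b)%g = (cg a * cg b)%g.
Proof. by rewrite /cg morphM ?inN. Qed.

Lemma cg1 : cg 1%g = 1%g.
Proof. by rewrite /cg morph1. Qed.

Lemma cgX a n : cg (a ^+ n)%g = (cg a ^+ n)%g.
Proof. by rewrite /cg morphX ?inN. Qed.

Lemma cgN a : (cg a ^+ NG gT)%g = 1%g.
Proof. by rewrite -cgX expN cg1. Qed.

Lemma commC (u v : coset_of H) : (u * v = v * u)%g.
Proof.
have := der_abelian 0 [set: gT].
have -> : ([set: gT]^`(0) / [set: gT]^`(1))%g = [set: coset_of H] by rewrite quotientT.
move/centsP => Hc. by apply: (Hc u (in_setT u) v (in_setT v)).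
Qed.

Definition cprodr (r : seq gT) (f : gT -> coset_of H) : coset_of H :=
  foldr (fun g acc => (f g * acc)%g) 1%g r.

Lemma cprod_eq r f h : (forall g, g \in r -> f g = h g) -> cprodr r f = cprodr r h.
Proof.
elim: r => [|x r IH] //= E; rewrite E ?mem_head // IH // => g Hg.
by apply: E; rewrite in_cons Hg orbT.
Qed.

Lemma cprod1 r : cprodr r (fun _ => 1%g) = 1%g.
Proof. by elim: r => [|x r IH] //=; rewrite IH mulg1. Qed.

Lemma cprod_mul r f h : cprodr r (fun g => f g * h g)%g = (cprodr r f * cprodr r h)%g.
Proof.
elim: r => [|x r IH] /=; first by rewrite mulg1.
rewrite IH !mulgA; congr (_ * _)%g; rewrite -!mulgA; congr (_ * _)%g; exact: commC.
Qed.

Lemma cprod_ind r x u : uniq r -> x \in r ->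
  cprodr r (fun g => if x == g then u else 1%g) = u.
Proof.
elim: r => [|y r IH] // Hu0 Hx0; move: Hu0 => /= /andP [Hy Hu].
case: (x =P y) => [E|Hne].
  rewrite ?E ?eqxx (cprod_eq (h := fun _ => 1%g)) ?cprod1 ?mulg1 //.
  move=> g Hg; case: (y =P g) => // E'; by move: Hy; rewrite E' Hg.
rewrite mul1g IH //; move: Hx0; rewrite in_cons => /orP [/eqP //|//].
Qed.

Definition Phi (x : sZ) : coset_of H :=
  cprodr (enum gT) (fun g => cg g ^+ absz ((x g) %% (NG gT)%:Z)%Z)%g.

Lemma expmod (u : coset_of H) (a b : int) : (u ^+ NG gT = 1)%g ->
  (u ^+ absz ((a + b) %% (NG gT)%:Z)%Z = u ^+ absz (a %% (NG gT)%:Z)%Z * u ^+ absz (b %% (NG gT)%:Z)%Z)%g.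
Proof.
move=> Hu.
have HN : (NG gT)%:Z != 0 by rewrite eqz_nat -lt0n NG_gt0.
set p := absz (a %% (NG gT)%:Z)%Z; set q := absz (b %% (NG gT)%:Z)%Z.
have Ha : (a %% (NG gT)%:Z)%Z = p%:Z by rewrite /p gez0_abs // modz_ge0.
have Hb : (b %% (NG gT)%:Z)%Z = q%:Z by rewrite /q gez0_abs // modz_ge0.
have -> : ((a + b) %% (NG gT)%:Z)%Z = ((p + q) %% NG gT)%N%:Z.
  by rewrite -modzDm Ha Hb -PoszD modz_nat.
by rewrite -expgD /= (expg_mod _ Hu).
Qed.

Lemma PhiD x y : Phi (x + y) = (Phi x * Phi y)%g.
Proof.
rewrite /Phi -cprod_mul; apply: cprod_eq => g _; rewrite ffunE; apply: expmod; exact: cgN.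
Qed.

Lemma Phi_nat S : (forall g, 0 <= S g) ->
  Phi S = cprodr (enum gT) (fun g => cg g ^+ absz (S g))%g.
Proof.
move=> H0; apply: cprod_eq => g _.
by rewrite -{1}(gez0_abs (H0 g)) modz_nat /= (expg_mod _ (cgN g)).
Qed.

Lemma cg_prodl t : cg (prodl t) = cprodr (enum gT) (fun g => cg g ^+ count_mem g t)%g.
Proof.
elim: t => [|x t IH] /=.
  by rewrite cg1 (cprod_eq (h := fun _ => 1%g)) ?cprod1.
rewrite cgM IH.
rewrite [RHS](cprod_eq (h := fun g => (if x == g then cg x else 1) * cg g ^+ count_mem g t)%g).
  by rewrite cprod_mul cprod_ind ?enum_uniq ?mem_enum.
move=> g _; rewrite expgD; case: (x =P g) => [->|] /=; by rewrite ?expg1 ?expg0.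
Qed.

Lemma Phi_seqof t : Phi (seqof t) = cg (prodl t).
Proof.
rewrite Phi_nat; last exact: seqof_ge0.
rewrite cg_prodl; apply: cprod_eq => g _; by rewrite ffunE.
Qed.

Lemma Phi_pi S x : (forall g, 0 <= S g) -> x \in pi_set S -> Phi S = cg x.
Proof. move=> H0 /(pi_out H0) [t [<- <-]]; exact: Phi_seqof. Qed.

Lemma Phi0 : Phi 0 = 1%g.
Proof. by rewrite -(seqof_nil gT) Phi_seqof cg1. Qed.

Lemma PhiN x : Phi (- x) = (Phi x)^-1%g.
Proof.
apply: (mulgI (Phi x)); by rewrite -PhiD subrr Phi0 mulgV.
Qed.

Lemma PhiB x y : Phi (x - y) = (Phi x * (Phi y)^-1)%g.
Proof. by rewrite PhiD PhiN. Qed.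

Lemma Phi_B (G0 : {set gT}) S : inB G0 S -> Phi S = 1%g.
Proof. move=> [HF Hp]; rewrite (Phi_pi (inF_ge0 HF) Hp) cg1 //. Qed.

Lemma Phi_q (G0 : {set gT}) x : qgrp (inB G0) x -> Phi x = 1%g.
Proof. by move=> [a [b [Ha [Hb ->]]]]; rewrite PhiB (Phi_B Ha) (Phi_B Hb) invg1 mulg1. Qed.

Lemma Phi_e g : Phi (e g) = cg g.
Proof. by rewrite Phi_seqof /= mulg1. Qed.

End Phi.
Section Part2.
Variable gT : finGroupType.
Local Notation sZ := (seqZ gT).
Local Notation H := (derivedT gT).
Local Notation B := (inB [set: gT]).
Local Notation F := (inF [set: gT]).
Local Open Scope ring_scope.
Implicit Types (S T : sZ) (t : seq gT).

Definition Pcert (x : gT) := exists t1 t2, seqof t1 = seqof t2 /\ prodl t1 = x /\ prodl t2 = 1%g.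

Lemma Pcert1 : Pcert 1%g.
Proof. by exists (Nil gT), (Nil gT). Qed.

Lemma PcertM x y : Pcert x -> Pcert y -> Pcert (x * y)%g.
Proof.
move=> [t1 [t2 [E1 [P1 Q1]]]] [s1 [s2 [E2 [P2 Q2]]]].
exists (t1 ++ s1), (t2 ++ s2); rewrite !seqof_cat !prodl_cat E1 E2 P1 P2 Q1 Q2 mulg1.
by [].
Qed.

Lemma PcertR a b : Pcert [~ a, b]%g.
Proof.
exists [:: a^-1; b^-1; a; b]%g, [:: a^-1; a; b^-1; b]%g; split.
  apply: seqof_perm; rewrite perm_cons.
  by rewrite -[[:: b^-1, a & [:: b]]%g]/([:: b^-1%g] ++ [:: a] ++ [:: b]) perm_catCA.
split; first by rewrite /= mulg1 commgEl conjgE !mulgA.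
by rewrite /= mulg1 !mulgA mulVg mul1g mulVg.
Qed.

Lemma Pcert_der x : x \in H -> Pcert x.
Proof.
move/gen_prodgP => [n [c Hc ->]].
elim: n c Hc => [|n IH] c Hc; first by rewrite big_ord0; exact: Pcert1.
rewrite big_ord_recr /=; apply: PcertM; first by apply: IH => i; exact: Hc.
by case/imset2P: (Hc ord_max) => a b _ _ ->; exact: PcertR.
Qed.

Lemma U_list (s : seq gT) : (forall x, x \in s -> Pcert x) ->
  exists t0, prodl t0 = 1%g /\ forall x, x \in s -> exists t, seqof t = seqof t0 /\ prodl t = x.
Proof.
elim: s => [|x s IH] Hs; first by exists (Nil gT).
have [t1 [t2 [E [P Q]]]] := Hs x (mem_head _ _).
have Hs' : forall y, y \in s -> Pcert y by move=> y Hy; apply: Hs; rewrite in_cons Hy orbT.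
have [t0 [P0 H0]] := IH Hs'.
exists (t2 ++ t0); split; first by rewrite prodl_cat Q P0 mulg1.
move=> y; rewrite in_cons => /orP [/eqP ->|Hy].
  exists (t1 ++ t0); by rewrite !seqof_cat E prodl_cat P P0 mulg1.
have [t [Et Pt]] := H0 y Hy; exists (t2 ++ t).
by rewrite !seqof_cat Et prodl_cat Q Pt mul1g.
Qed.

Lemma U_lemma : exists U, B U /\ forall x, x \in H -> exists t, seqof t = U /\ prodl t = x.
Proof.
have Hs : forall x, x \in enum H -> Pcert x by move=> x; rewrite mem_enum; exact: Pcert_der.
have [t0 [P0 H0]] := U_list Hs.
exists (seqof t0); split; first by apply: inB_seqof => //; exact: inF_seqofT.
by move=> x Hx; apply: H0; rewrite mem_enum.
Qed.

Lemma exists_avoid (u v : gT) : (3 <= #|[set: gT]|)%N -> exists a, a != u /\ a != v.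
Proof.
move=> H3; case: (boolP [exists a, (a != u) && (a != v)]).
  by move/existsP => [a /andP [H1 H2]]; exists a.
rewrite negb_exists => /forallP Hall; exfalso.
have : [set: gT] \subset [set u; v].
  apply/subsetP => a _; rewrite !inE; move: (Hall a); by rewrite negb_and !negbK.
move/subset_leq_card; rewrite cards2 => Hle.
by move: (leq_trans H3 Hle); case: (u != v).
Qed.

Lemma qgrp_add a b : qgrp B a -> qgrp B b -> qgrp B (a + b).
Proof.
move=> [a1 [a2 [H1 [H2 ->]]]] [b1 [b2 [H3 [H4 ->]]]].
exists (a1 + b1), (a2 + b2); split; first exact: inBD.
split; first exact: inBD.
by rewrite opprD addrACA.
Qed.

Lemma qgrp_opp a : qgrp B a -> qgrp B (- a).
Proof.
move=> [a1 [a2 [H1 [H2 ->]]]]; exists a2, a1; do 2!split => //.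
by rewrite opprB.
Qed.

Lemma qgrp_B S : B S -> qgrp B S.
Proof. by move=> HS; exists S, 0; do 2!split => //; [exact: inB0|rewrite subr0]. Qed.

Lemma F_ker S : (forall g, 0 <= S g) -> Phi S = 1%g -> qgrp B S.
Proof.
move=> H0 HP.
have Hs : prodl (terms S) \in H.
  apply: coset_idr; first exact: inN.
  by rewrite -/(cg _) -Phi_seqof seqof_terms.
have [U [HU HUx]] := U_lemma.
have [tu [Etu Ptu]] := HUx _ (groupVr Hs).
exists (U + S), U; split.
  rewrite -Etu -(seqof_terms H0) -seqof_cat; apply: inB_seqof; first exact: inF_seqofT.
  by rewrite prodl_cat Ptu mulVg.
split => //; by rewrite [U + S]addrC addrK.
Qed.

Lemma decomp x : exists S, F S /\ qgrp B (x - S).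
Proof.
pose xn : sZ := [ffun g => if 0 <= x g then 0 else - x g].
have Hxn : forall g, 0 <= xn g.
  move=> g; rewrite ffunE; case: ifP => // /negbT; rewrite -ltNge => H.
  by rewrite oppr_ge0 ltW.
have Hn := NG_gt0 gT.
exists (x + xn *+ NG gT); split.
  apply/inFT => g; rewrite ffunE ffunMnE ffunE; case: ifP => [H|/negbT].
    by rewrite mul0rn addr0.
  rewrite -ltNge => H; rewrite -(prednK Hn) mulrS addrA subrr add0r.
  by apply: mulrn_wge0; rewrite oppr_ge0 ltW.
have -> : x - (x + xn *+ NG gT) = 0 - xn *+ NG gT by rewrite opprD addrA subrr.
exists 0, (xn *+ NG gT); split; first exact: inB0.
split => //; by apply: inB_hN; apply/inFT.
Qed.

Lemma Phi_ker x : Phi x = 1%g -> qgrp B x.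
Proof.
move=> HP; have [S [HS Hq]] := decomp x.
have HPS : Phi S = 1%g.
  move: HP; have -> : x = S + (x - S) by rewrite addrC subrK.
  by rewrite PhiD (Phi_q Hq) mulg1.
have -> : x = S + (x - S) by rewrite addrC subrK.
apply: qgrp_add => //; apply: F_ker => //; exact: inF_ge0 HS.
Qed.

Lemma cic_ge0 a : cic B a -> forall g, 0 <= a g.
Proof.
move=> [_ [c [Hc Hn]]] g; rewrite leNgt; apply/negP => Hneg.
have := inF_ge0 (Hn (absz (c g)).+1).1 g.
rewrite ffunE ffunMnE -mulr_natr natz.
have := ler_norm (c g); rewrite -abszE.
move: Hneg; set u := (a g : int); set w := (c g : int); set m := absz w; nia.
Qed.

Lemma B_cic S : B S -> cic B S.
Proof.
move=> HS; split; first exact: qgrp_B.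
exists 0; split; first exact: inB0.
by move=> n; rewrite add0r; exact: inBMn.
Qed.

Lemma cic_char S : (forall g, 0 <= S g) -> Phi S = 1%g -> cic B S.
Proof.
move=> H0 HP; split; first exact: F_ker.
have Hs : prodl (terms S) \in H.
  apply: coset_idr; first exact: inN.
  by rewrite -/(cg _) -Phi_seqof seqof_terms.
have [U [HU HUx]] := U_lemma.
exists U; split => // n.
have [t' [E' P']] := rep_list (terms S) n.
rewrite seqof_terms // in E'.
have [tu [Etu Ptu]] := HUx _ (groupVr (groupX n Hs)).
rewrite -Etu -E' -seqof_cat; apply: inB_seqof; first exact: inF_seqofT.
by rewrite prodl_cat Ptu P' mulVg.
Qed.

Lemma cic_q a : cic B a -> qgrp B a.
Proof. by case. Qed.

Lemma Phi_cic a : cic B a -> Phi a = 1%g.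
Proof. move/cic_q; exact: Phi_q. Qed.

Lemma vg_lemma (hG : (3 <= #|[set: gT]|)%N) (g : gT) (z : int) :
  (exists S, B S /\ S g = z) <-> 0 <= z.
Proof.
split; first by move=> [S [[HF _] <-]]; exact: inF_ge0 HF g.
move=> Hz.
pose a := (g ^+ absz z)%g.
have [b [Hb1 Hb2]] := exists_avoid g ((g * a)^-1)%g hG.
pose c := (b^-1 * a^-1)%g.
have Hc : c != g.
  apply/eqP => E; move/eqP: Hb2; apply; rewrite invMg -E /c invMg invgK.
  by rewrite !invgK mulKg.
exists (seqof (nseq (absz z) g ++ [:: b; c])); split.
  apply: inB_seqof; first exact: inF_seqofT.
  by rewrite prodl_cat prodl_nseq /= mulg1 /c mulKVg -/a mulgV.
rewrite ffunE count_cat count_nseq /= eqxx mul1n.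
by rewrite (negbTE Hb1) (negbTE Hc) /= !addn0 gez0_abs.
Qed.

Lemma gcd_part (hG : (3 <= #|[set: gT]|)%N) al : F al ->
  exists s : seq sZ, s != [::] /\ (forall x, x \in s -> cic B x) /\ is_gcd_in F al s.
Proof.
move=> Fal.
have H0 := inF_ge0 Fal.
pose h := prodl (terms al).
have [a [Ha1 Ha2]] := exists_avoid 1%g h^-1%g hG.
pose p := al + e h^-1%g; pose q := al + (e a + e (h * a)^-1%g).
have Hp : B p.
  rewrite /p -{1}(seqof_terms H0) /e -seqof_cat; apply: inB_seqof; first exact: inF_seqofT.
  by rewrite prodl_cat /= mulg1 mulgV.
have Hq : B q.
  rewrite /q -{1}(seqof_terms H0) /e -seqof_cat -seqof_cat /=; apply: inB_seqof; first exact: inF_seqofT.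
  by rewrite prodl_cat /= mulg1 -/h invMg mulKVg mulgV.
have Hne : (h * a)^-1%g != h^-1%g.
  apply: contra Ha1 => /eqP /invg_inj E; apply/eqP.
  by apply: (mulgI h); rewrite mulg1.
exists [:: p; q]; split => //; split.
  by move=> x; rewrite !inE => /orP [/eqP ->|/eqP ->]; apply: B_cic.
split => //; split.
  move=> x; rewrite !inE => /orP [/eqP ->|/eqP ->].
    by exists (e h^-1%g); split => //; apply: inF_e; rewrite in_setT.
  exists (e a + e (h * a)^-1%g); split => //.
  by apply: inFD; apply: inF_e; rewrite in_setT.
move=> be Fbe Hdiv.
have [c1 [Fc1 E1]] := Hdiv p (mem_head _ _).
have Hqin : q \in [:: p; q] by rewrite !inE eqxx orbT.
have [c2 [Fc2 E2]] := Hdiv q Hqin.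
exists (al - be); split; last by rewrite addrC subrK.
apply/inFT => g; move/ffunP: E1 => /(_ g); move/ffunP: E2 => /(_ g).
rewrite /p /q !ffunE /= !addn0 => E2 E1.
have := inF_ge0 Fc1 g; have := inF_ge0 Fc2 g.
move: E1 E2; set u := (al g : int); set w := (be g : int); set c1g := (c1 g : int); set c2g := (c2 g : int).
case: (h^-1 =P g)%g => [Eg|Ng].
  rewrite -Eg (negbTE (Ha2 : a != h^-1)%g) (negbTE Hne) /=; lia.
rewrite /=; lia.
Qed.

End Part2.
Section Part3.
Variable gT : finGroupType.
Local Notation sZ := (seqZ gT).
Local Notation B := (inB [set: gT]).
Local Notation F := (inF [set: gT]).
Local Open Scope ring_scope.

Lemma Phi_equiv (y y' : sZ) : F y -> F y' -> H_equiv B F y y' -> Phi y = Phi y'.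
Proof.
move=> Fy Fy' He.
have Hn := NG_gt0 gT.
have Fx : F (y *+ (NG gT).-1) by apply: inFMn.
have E : y + y *+ (NG gT).-1 = y *+ NG gT by rewrite -mulrS prednK.
have H1 : B (y + y *+ (NG gT).-1) by rewrite E; exact: inB_hN.
have H2 := (He _ Fx).1 H1.
apply: (mulIg (Phi (y *+ (NG gT).-1)%R)); by rewrite -!PhiD (Phi_B H1) (Phi_B H2).
Qed.

Lemma Phi_surj (c : coset_of (derivedT gT)) : exists y, F y /\ Phi y = c.
Proof.
exists (e (repr c)); split; first by apply: inF_e; rewrite in_setT.
by rewrite Phi_e /cg coset_reprK.
Qed.
End Part3.

Theorem proposition3p5 (gT : finGroupType) (hG : 3 <= #|[set: gT]|) :
  (* (1) *)
  (forall G0 : {set gT},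
     (forall A : seqZ gT, inF G0 A ->
        exists S, inB G0 S /\ dvd_in (inF G0) A S) /\
     C_monoid (inB G0)) /\
  (* (2) *)
  ((forall (g : gT) (z : int),
      (exists S, inB [set: gT] S /\ S g = z) <-> (0 <= z)%R) /\
   incl_divisor_theory (cic (inB [set: gT])) (inF [set: gT]) /\
   (forall x : seqZ gT,
      qgrp (cic (inB [set: gT])) x <-> qgrp (inB [set: gT]) x) /\
   (forall x : seqZ gT, exists S, inF [set: gT] S /\
      qgrp (inB [set: gT]) (x - S)%R) /\
   (exists Phi : seqZ gT -> coset_of (derivedT gT),
      (forall S g, inF [set: gT] S -> g \in pi_set S -> Phi S = coset (derivedT gT) g) /\
      (forall x y, qgrp (inB [set: gT]) (x - y)%R -> Phi x = Phi y) /\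
      (forall x y, Phi (x + y)%R = (Phi x * Phi y)%g) /\
      (forall x, Phi x = 1%g -> qgrp (inB [set: gT]) x) /\
      (forall c, exists x, Phi x = c))) /\
  (* (3) *)
  (exists Psi : seqZ gT -> coset_of (derivedT gT),
     (forall y y', inF [set: gT] y -> inF [set: gT] y' ->
        H_equiv (inB [set: gT]) (inF [set: gT]) y y' -> Psi y = Psi y') /\
     (forall y y', inF [set: gT] y -> inF [set: gT] y' ->
        Psi (y + y')%R = (Psi y * Psi y')%g) /\
     (forall c, exists y, inF [set: gT] y /\ Psi y = c)).
Proof.
split.
  move=> G0; split; [exact: cofinal | exact: C_monoid_B].
split.
  split; first by move=> g z; exact: vg_lemma.
  split.
    split; first by move=> a Ha; apply/inFT; exact: cic_ge0.
    split.
      move=> a b Ha Hb [d [Fd E]]; subst b; exists d; split => //.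
      apply: cic_char; first exact: inF_ge0 Fd.
      by move: (Phi_cic Hb); rewrite PhiD (Phi_cic Ha) mul1g.
    move=> al Fal; exact: gcd_part.
  split.
    move=> x; split.
      move=> [a [b [Ha [Hb ->]]]]; apply: qgrp_add; first exact: cic_q.
      by apply: qgrp_opp; exact: cic_q.
    by move=> [a [b [Ha [Hb ->]]]]; exists a, b; split; [exact: B_cic|split; [exact: B_cic|]].
  split; first exact: decomp.
  exists (@Phi gT); split.
    by move=> S g HS Hg; apply: Phi_pi => //; exact: inF_ge0 HS.
  split.
    move=> x y /Phi_q; rewrite PhiB => E.
    by rewrite -(mulgKV (Phi y) (Phi x)) E mul1g.
  split; first exact: PhiD.
  split; first exact: Phi_ker.
  by move=> c; have [y [_ Hy]] := Phi_surj c; exists y.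
exists (@Phi gT); split; first exact: Phi_equiv.
split; first by move=> y y' _ _; exact: PhiD.
exact: Phi_surj.
Qed.
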